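(* Let $q$ be a prime power, $u,v$ non-zero in $\mathbb{F}_q$, and write $\mathrm{Rad}(q-1)=k\,p_1\cdots p_s$ with $k$ a divisor and $p_1,\ldots,p_s$ distinct primes. Let $\delta_2=1-2\sum_{i=1}^s 1/p_i$ and $M=M_{q-1,q-1}$. Then $$M\geq \sum_{i=1}^s\{[M_{p_ik,k}-\theta(p_i)M_{k,k}]+[M_{k,p_ik}-\theta(p_i)M_{k,k}]\}+\delta_2M_{k,k}.$$
   Context: $\mathrm{Rad}(m)$ is the product of the distinct primes dividing $m$; $\theta(m)=\phi(m)/m$. For a divisor $e$ of $q-1$, a non-zero $a\in\mathbb{F}_q$ is $e$-free if $a=b^d$ with $b\in\mathbb{F}_q$, $d\mid e$ implies $d=1$ (primitive means $(q-1)$-free). For divisors $e_1,e_2$ of $q-1$, $M_{e_1,e_2}$ is the number of non-zero $a\in\mathbb{F}_q$ such that $a$ is $e_1$-free and $ua+va^{-1}$ is (non-zero and) $e_2$-free; thus $M_{q-1,q-1}$ is the number of primitive $a$ with $ua+va^{-1}$ primitive. *)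

(* Defs.v *)
From mathcomp Require Import all_boot all_order all_algebra all_field.
Set Implicit Arguments. Unset Strict Implicit. Unset Printing Implicit Defensive.
Import Order.TTheory GRing.Theory Num.Theory.
Local Open Scope ring_scope.

Definition Rad (m : nat) : nat := (\prod_(p <- primes m) p)%N.

Definition theta (m : nat) : rat := (totient m)%:R / m%:R.

(* a is e-free : a <> 0 and (a = b^d with d | e) implies d = 1.
   Divisors d of e (e > 0) satisfy d <= e, so d ranges over 'I_e.+1. *)
Definition efree (F : finFieldType) (e : nat) (a : F) : bool :=
  (a != 0) &&
  [forall d : 'I_e.+1,
     ((d %| e)%N && [exists b : F, a == b ^+ d]) ==> (d == 1%N :> nat)].

Definition Mcount (F : finFieldType) (u v : F) (e1 e2 : nat) : nat :=
  #|[set a : F | (a != 0) && efree e1 a && efree e2 (u * a + v * a^-1)]|.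

(* Main.v *)
Require Import Defs.
From mathcomp Require Import all_boot all_order all_algebra all_field.
From mathcomp Require Import zify ring.
Import Order.TTheory GRing.Theory Num.Theory.
Local Open Scope ring_scope.

Definition ppow {F : finFieldType} (p : nat) (a : F) := [exists b : F, a == b ^+ p].

Lemma efreeP {F : finFieldType} e {a : F} : (0 < e)%N ->
  reflect (a != 0 /\ forall r, prime r -> (r %| e)%N -> ~~ ppow r a) (efree e a).
Proof.
move=> e0; apply: (iffP andP) => [[a0 /forallP H]|[a0 H]]; split=> //.
- move=> r pr re; apply/negP; rewrite /ppow => pw.
  have rle : (r < e.+1)%N by rewrite ltnS dvdn_leq.
  have := H (Ordinal rle); rewrite /= re pw /= => /eqP r1.
  by rewrite r1 in pr.
- apply/forallP => d; apply/implyP => /andP [de /existsP [b /eqP ab]].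
  apply/negPn/negP => d1.
  have d0 : (0 < d)%N.
    rewrite lt0n; apply/negP => /eqP d0; move: de; rewrite d0 dvd0n => /eqP.
    by move=> ee; rewrite ee in e0.
  have d2: (1 < d)%N by rewrite ltn_neqAle eq_sym d1 d0.
  have pd := pdiv_prime d2; have pdd := pdiv_dvd d.
  have := H _ pd (dvdn_trans pdd de); move/negP; apply; apply/existsP.
  by exists (b ^+ (d %/ pdiv d)); rewrite ab -exprM divnK.
Qed.

Lemma prime_dvd_prodseq (r : nat) (s : seq nat) : prime r -> all prime s ->
  (r %| \prod_(p <- s) p)%N = (r \in s).
Proof.
move=> pr; elim: s => [|p s IH]; first by rewrite big_nil Euclid_dvd1.
rewrite big_cons /= => /andP [pp ps]; rewrite Euclid_dvdM // IH // in_cons.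
by rewrite dvdn_prime2.
Qed.

Lemma card_bigcup_seq (T : finType) (s : seq nat) (X : nat -> {set T}) :
  (#|\bigcup_(p <- s) X p| <= \sum_(p <- s) #|X p|)%N.
Proof.
elim: s => [|p s IH]; first by rewrite !big_nil cards0.
rewrite !big_cons; apply: leq_trans (leq_card_setU _ _) _.
by rewrite leq_add2l.
Qed.

Lemma in_bigcup_seq (T : finType) (s : seq nat) (X : nat -> {set T}) x p :
  p \in s -> x \in X p -> x \in \bigcup_(q <- s) X q.
Proof.
elim: s => //= q s IH; rewrite in_cons big_cons inE => /orP[/eqP<- ->//|ps xp].
by rewrite IH ?orbT.
Qed.

Theorem lemma6p2 (F : finFieldType) (u v : F) (k : nat) (ps : seq nat) :
  u != 0 -> v != 0 ->
  uniq ps -> all prime ps ->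
  Rad #|F|.-1 = (k * \prod_(p <- ps) p)%N ->
  let q1 := #|F|.-1 in
  let M := Mcount u v in
  let delta2 : rat := 1 - 2 * \sum_(p <- ps) (p%:R)^-1 in
  \sum_(p <- ps)
      (((M (p * k)%N k)%:R - theta p * (M k k)%:R)
       + ((M k (p * k)%N)%:R - theta p * (M k k)%:R))
    + delta2 * (M k k)%:R
  <= (M q1 q1)%:R.
Proof.
move=> _ _ _ allp HR; cbv zeta.
set q1 := #|F|.-1; set M := Mcount u v; set delta2 := (1 - _ : rat).
have q0 : (0 < q1)%N.
  rewrite /q1 -ltnS prednK ?card_gt0; last by apply/card_gt0P; exists 0.
  by rewrite (cardD1 (0:F)) (cardD1 (1:F)) !inE oner_neq0.
have R0 : (0 < Rad q1)%N.
  rewrite /Rad big_seq prodn_cond_gt0 // => p; rewrite mem_primes; by case/and3P => /prime_gt0.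
have k0 : (0 < k)%N by move: R0; rewrite /q1 HR muln_gt0 => /andP[].
have Rdiv : forall r, prime r -> (r %| q1)%N = (r %| k)%N || (r \in ps).
  move=> r pr; rewrite -prime_dvd_prodseq // -Euclid_dvdM // -HR /Rad.
  rewrite Euclid_dvd_prod // big_has.
  apply/idP/hasP => [rq|[p]]; first by exists r; rewrite ?dvdnn // mem_primes pr q0.
  by rewrite mem_primes => /and3P[pp _ pq]; rewrite dvdn_prime2 // => /eqP->.
have pos : forall p, p \in ps -> (0 < p)%N.
  by move=> p ps1; apply: prime_gt0; move/allP: allp; apply.
have efq : forall a : F, efree q1 a = efree k a && all (fun p => efree p a) ps.
  move=> a; apply/(efreeP _ q0)/andP => [[a0 H]|[/(efreeP _ k0)[a0 Hk] /allP Hp]].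
    split; first by apply/(efreeP _ k0); split=> // r pr rk; apply: H; rewrite // Rdiv // rk.
    apply/allP => p pin; apply/(efreeP _ (pos _ pin)); split=> // r pr rp.
    apply: H => //; rewrite Rdiv // orbC.
    have pp : prime p by move/allP: allp; apply.
    by move: rp; rewrite dvdn_prime2 // => /eqP->; rewrite pin.
  split=> // r pr; rewrite Rdiv // => /orP[|rin]; first exact: Hk.
  by have /(efreeP _ (pos _ rin)) [_] := Hp _ rin; apply; rewrite ?dvdnn.
have efpk : forall p (a : F), p \in ps -> efree (p * k) a = efree k a && efree p a.
  move=> p a pin; have p0 := pos _ pin.
  have pk0 : (0 < p * k)%N by rewrite muln_gt0 p0.
  apply/(efreeP _ pk0)/andP => [[a0 H]|[/(efreeP _ k0)[a0 Hk] /(efreeP _ p0)[_ Hp]]].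
    split; [apply/(efreeP _ k0)|apply/(efreeP _ p0)]; split=> // r pr rd; apply: H => //.
      by rewrite dvdn_mull.
    by rewrite dvdn_mulr.
  split=> // r pr; rewrite Euclid_dvdM // => /orP[]; [exact: Hp | exact: Hk].
pose w (a : F) := u * a + v * a^-1.
pose S := [set a : F | (a != 0) && efree k a && efree k (w a)].
pose A p := S :\: [set a | efree p a].
pose B p := S :\: [set a | efree p (w a)].
have MSk : M k k = #|S| by [].
have Mpk : forall p, p \in ps -> (M (p * k)%N k + #|A p| = #|S|)%N.
  move=> p pin; rewrite -(cardsID [set a | efree p a] S); congr (_ + _)%N.
  rewrite /M /Mcount; apply: eq_card => a; rewrite !inE efpk //.
  by rewrite -!andbA; do !bool_congr.
have Mkp : forall p, p \in ps -> (M k (p * k)%N + #|B p| = #|S|)%N.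
  move=> p pin; rewrite -(cardsID [set a | efree p (w a)] S); congr (_ + _)%N.
  rewrite /M /Mcount; apply: eq_card => a; rewrite !inE efpk //.
  by rewrite -!andbA; do !bool_congr.
pose U := \bigcup_(p <- ps) (A p :|: B p).
have MU : (#|S| <= M q1 q1 + \sum_(p <- ps) (#|A p| + #|B p|))%N.
  apply: (@leq_trans (#|S :\: U| + #|U|)).
    rewrite -(cardsID U S) addnC leq_add2l; apply: subset_leq_card; exact: subsetIr.
  apply: leq_add; last first.
    apply: (leq_trans (card_bigcup_seq _ ps (fun p => A p :|: B p))); apply: leq_sum => p _.
    exact: leq_card_setU.
  apply: subset_leq_card; apply/subsetP => a; rewrite !inE => /andP[nU aS].
  move: aS => /andP[/andP[a0 ka] kw]; rewrite a0 !efq ka kw /=.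
  have H : forall p, p \in ps -> efree p a && efree p (w a).
    move=> p pin; apply/andP; split; apply/negPn/negP => H; move/negP: nU; apply;
    apply: (in_bigcup_seq _ _ _ _ _ pin); rewrite !inE a0 ka kw /= H ?orbT //.
  by apply/andP; split; apply/allP => p pin; have /andP[] := H p pin.
have E : forall p, p \in ps ->
   (((M (p * k)%N k)%:R - theta p * (M k k)%:R)
       + ((M k (p * k)%N)%:R - theta p * (M k k)%:R) : rat)
   = 2 * (p%:R)^-1 * #|S|%:R - (#|A p| + #|B p|)%N%:R.
  move=> p pin; have pp : prime p by move/allP: allp; apply.
  have -> : (M (p * k)%N k)%:R = #|S|%:R - #|A p|%:R :> rat.
    by rewrite -(Mpk p pin) natrD addrK.
  have -> : (M k (p * k)%N)%:R = #|S|%:R - #|B p|%:R :> rat.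
    by rewrite -(Mkp p pin) natrD addrK.
  have p0 : (p%:R : rat) != 0 by rewrite pnatr_eq0 -lt0n pos.
  rewrite /theta totient_prime // MSk natrD.
  have -> : (p.-1)%:R = (p%:R - 1 : rat) by rewrite -subn1 natrB ?pos.
  field.
  exact: p0.
rewrite big_seq (eq_bigr (fun p => 2 * (p%:R)^-1 * #|S|%:R - (#|A p| + #|B p|)%N%:R)); last first.
  by move=> p pin; exact: E.
rewrite -big_seq sumrB -!mulr_suml -mulr_sumr -natr_sum /delta2 MSk.
set X := \sum_(p <- ps) _.
set C := (\sum_(p <- ps) _)%N.
have -> : 2 * X * #|S|%:R - C%:R + (1 - 2 * X) * #|S|%:R = #|S|%:R - C%:R :> rat by ring.
by rewrite lerBlDr -natrD ler_nat.
Qed.
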